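(* Let $h \in \mathbb{R}[t]$ satisfy $h(t) \geq 1$ for $t \geq 0$ and $h(t)\ge 0$ for all $t \in \mathbb{R}$, and let $H(x_1, \ldots, x_d) = \prod_{j=1}^d h(x_j)$. For $\mathcal{I} \subseteq \{1,\dots,d\}$ let $H_{\mathcal{I}}(x) = H(\sigma_{\mathcal{I}}x)$, where $\sigma_{\mathcal{I}}$ changes the sign of the coordinates $x_k$, $k\in\mathcal{I}$. Assume $\mu$ is an admissible measure on $\mathbb{R}^d$ which is indeterminate. Then there exist $a \in \mathbb{R}^d$ and a constant $\gamma_a >0$ such that $$\sum_{\mathcal{I} \subseteq \{1, \ldots, d \}} \int H_\mathcal{I}(x-a)\, d\mu(x) \;\geq\; \mu(\mathbb{R}^d) + \gamma_a .$$
   Context: An admissible measure on $\mathbb{R}^d$ is a positive Radon measure $\mu$ such that $\int |p|\,d\mu<\infty$ for every polynomial $p$. $\mu$ is indeterminate if there is an admissible measure on $\mathbb{R}^d$, distinct from $\mu$, giving the same integral to every polynomial. The sum is over all subsets, including the empty set. *)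

(* Defs.v *)
From HB Require Import structures.
From mathcomp Require Import all_boot all_order all_algebra.
From mathcomp Require Import all_classical all_reals all_analysis.
From mathcomp Require mpoly.

Set Implicit Arguments.
Unset Strict Implicit.
Unset Printing Implicit Defensive.

Import Order.TTheory GRing.Theory Num.Theory.
Local Open Scope classical_set_scope.
Local Open Scope ring_scope.

(* R^d is modelled as d.-tuple R with the product (= Borel) sigma-algebra
   generated by the coordinate maps; R carries its Borel sigma-algebra. *)

Definition peval {R : realType} {d : nat} (p : mpoly.mpoly d R)
  (x : d.-tuple R) : R := mpoly.meval (fun i => tnth x i) p.

(* admissible: positive measure, every polynomial is integrable
   (so in particular the measure is finite, hence Radon) *)
Definition admissible {R : realType} {d : nat}
  (mu : {measure set (d.-tuple R) -> \bar R}) : Prop :=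
  forall p : mpoly.mpoly d R,
    mu.-integrable setT (fun x => (peval p x)%:E).

Definition indeterminate {R : realType} {d : nat}
  (mu : {measure set (d.-tuple R) -> \bar R}) : Prop :=
  exists nu : {measure set (d.-tuple R) -> \bar R},
    admissible nu /\
    ~ (forall A, measurable A -> nu A = mu A) /\
    forall p : mpoly.mpoly d R,
      (\int[nu]_x (peval p x)%:E = \int[mu]_x (peval p x)%:E)%E.

Definition HI {R : realType} {d : nat} (h : {poly R}) (I : {set 'I_d})
  (y : 'I_d -> R) : R :=
  \prod_(j < d) h.[(if j \in I then -1 else 1) * y j].

(* Main.v *)
Require Import Defs.
From HB Require Import structures.
From mathcomp Require Import all_boot all_order all_algebra.
From mathcomp Require Import all_classical all_reals all_analysis.
From mathcomp Require mpoly.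
From mathcomp Require Import lra measurable_realfun.

Import Order.TTheory GRing.Theory Num.Theory.
Local Open Scope classical_set_scope.
Local Open Scope ring_scope.

Section G.
Variables (R : realType) (h : {poly R}).
Hypothesis h_ge1 : forall t : R, 0 <= t -> 1 <= h.[t].
Hypothesis h_ge0 : forall t : R, 0 <= h.[t].

Definition pp : {poly R} := h + (h \Po (- 'X)) - 1.

Lemma ppE t : pp.[t] = h.[t] + h.[- t] - 1.
Proof. by rewrite /pp !hornerE horner_comp !hornerE. Qed.

Lemma G_ge1 t : 1 <= h.[t] + h.[- t].
Proof.
have [t0|t0] := leP 0 t.
  by rewrite -[1]addr0 lerD ?h_ge1.
by rewrite -[1]add0r lerD ?h_ge1 // oppr_ge0 ltW.
Qed.

Lemma pp_ge0 t : 0 <= pp.[t].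
Proof. by rewrite ppE subr_ge0 G_ge1. Qed.

Lemma pp_neq0 : pp != 0.
Proof.
apply/eqP => p0; have := ppE 0; rewrite p0 horner0 oppr0.
have := @h_ge1 0 (lexx 0); lra.
Qed.

Lemma pp_sum_gt0 t : 0 < \sum_(k < (size pp).+1) pp.[t - k%:R].
Proof.
rewrite lt_def sumr_ge0 ?andbT; last by move=> k _; exact: pp_ge0.
apply/negP => /eqP H0.
have H := psumr_eq0P (fun (k : 'I_(size pp).+1) _ => pp_ge0 (t - (nat_of_ord k)%:R)) H0.
have Hr : forall k, (k < (size pp).+1)%N -> root pp (t - k%:R).
  by move=> k lk; apply/eqP; rewrite -[k]/(val (Ordinal lk)) H.
have := max_poly_roots pp_neq0 (rs := [seq t - k%:R | k <- iota 0 (size pp).+1]).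
rewrite size_map size_iota ltnNge leqnSn => Hc; suff : ~~ true by []; apply: Hc; last first.
  rewrite map_inj_uniq ?iota_uniq // => i j /eqP.
  by move=> /eqP /addrI /oppr_inj /eqP; rewrite eqr_nat => /eqP.
by apply/allP => x /mapP [k]; rewrite mem_iota add0n => /andP [_ lk] ->; exact: Hr.
Qed.
End G.
Lemma sum_subsets (R : comNzRingType) d (F : 'I_d -> bool -> R) :
  \sum_(I : {set 'I_d}) \prod_(j < d) F j (j \in I) =
  \prod_(j < d) (F j true + F j false).
Proof.
transitivity (\prod_(j < d) \sum_(b : bool) F j b); last first.
  by apply: eq_bigr => j _; rewrite big_bool.
rewrite bigA_distr_bigA /=.
rewrite (reindex (fun f : {ffun 'I_d -> bool} => finset (fun j => f j))) /=; last first.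
  exists (fun I : {set 'I_d} => [ffun j => j \in I]) => f _.
    by apply/ffunP => j; rewrite ffunE inE.
  by apply/setP => j; rewrite inE ffunE.
apply: eq_bigr => f _; apply: eq_bigr => j _; by rewrite inE.
Qed.

Lemma HI_sum (R : realType) d (h : {poly R}) (y : 'I_d -> R) :
  \sum_(I : {set 'I_d}) HI h I y = \prod_(j < d) (h.[y j] + h.[- y j]).
Proof.
have := @sum_subsets R d (fun j b => h.[(if b then -1 else 1) * y j]).
rewrite /= => ->; apply: eq_bigr => j _.
by rewrite mulN1r mul1r addrC.
Qed.

Lemma ex_gamma (R : realType) (J : \bar R) : (0 < J)%E ->
  exists gamma : R, 0 < gamma /\ (gamma%:E <= J)%E.
Proof.
case: J => [r| |] //.
- by rewrite lte_fin => r0; exists r; split.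
- by move=> _; exists 1; split; rewrite ?ltr01 ?leey.
Qed.

Lemma mu_setT_neq0 (R : realType) d (mu : {measure set (d.-tuple R) -> \bar R}) :
  indeterminate mu -> mu setT != 0%E.
Proof.
move=> [nu [_ [Hne Hint]]]; apply/eqP => m0; apply: Hne => A mA.
have := Hint (mpoly.mpolyC _ 1); rewrite /peval.
under eq_integral do rewrite mpoly.mevalC.
under [X in _ = X -> _]eq_integral do rewrite mpoly.mevalC.
rewrite !integral_cst // !mul1e m0 => n0.
have nA : nu A = 0%E.
  by apply/eqP; rewrite -measure_le0 -n0 le_measure ?inE.
have mA0 : mu A = 0%E.
  by apply/eqP; rewrite -measure_le0 -m0 le_measure ?inE.
by rewrite nA mA0.
Qed.

Lemma not_ind0 (R : realType) (mu : {measure set (0.-tuple R) -> \bar R}) :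
  ~ indeterminate mu.
Proof.
move=> [nu [_ [Hne Hint]]]; apply: Hne => A mA.
have := Hint (mpoly.mpolyC _ 1); rewrite /peval.
under eq_integral do rewrite mpoly.mevalC.
under [X in _ = X -> _]eq_integral do rewrite mpoly.mevalC.
rewrite !integral_cst // !mul1e => Hs.
have [[x Ax]|nA] := pselect (exists x, A x).
  have -> : A = setT.
    apply/seteqP; split => // y _; by rewrite (tuple0 y) -(tuple0 x).
  exact: Hs.
have -> : A = set0.
  by apply/seteqP; split => // y Ay; apply: nA; exists y.
by rewrite !measure0.
Qed.

Theorem mainTheorem7 (R : realType) (d : nat) (h : {poly R})
  (h_ge1 : forall t : R, 0 <= t -> 1 <= h.[t])
  (h_ge0 : forall t : R, 0 <= h.[t])
  (mu : {measure set (d.-tuple R) -> \bar R})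
  (mu_adm : admissible mu) (mu_ind : indeterminate mu) :
  exists (a : d.-tuple R) (gamma : R), 0 < gamma /\
    (mu setT + gamma%:E <=
      \sum_(I : {set 'I_d})
         \int[mu]_x (HI h I (fun j => tnth x j - tnth a j))%:E)%E.
Proof.
have mu0 := @mu_setT_neq0 R d mu mu_ind.
case: d mu mu_adm mu_ind mu0 => [|d] mu _ mu_ind mu0.
  by exfalso; exact: not_ind0 mu_ind.
set p := @pp R h.
have mf : forall k : nat,
    measurable_fun setT (fun x : d.+1.-tuple R => (p.[tnth x ord0 - k%:R])%:E).
  move=> k; apply/measurable_EFinP.
  apply: (measurableT_comp (f := horner p)).
    exact: measurable_poly.
  apply: measurable_funB; last exact: measurable_cst.
  exact: measurable_tnth.
have f0 : forall (k : nat) (x : d.+1.-tuple R), (0 <= (p.[tnth x ord0 - k%:R])%:E)%E.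
  by move=> k x; rewrite lee_fin (@pp_ge0 R h h_ge1 h_ge0).
have [k Hk] : exists k : 'I_(size p).+1,
    (0 < \int[mu]_x (p.[tnth x ord0 - (nat_of_ord k)%:R])%:E)%E.
  apply: contrapT => Hn.
  have Hz : forall k : 'I_(size p).+1,
      (\int[mu]_x (p.[tnth x ord0 - (nat_of_ord k)%:R])%:E = 0)%E.
    move=> k; apply/eqP; rewrite eq_le (integral_ge0 _ (fun x _ => f0 k x)) andbT.
    by rewrite leNgt; apply/negP => Hp; apply: Hn; exists k.
  have : (\int[mu]_x `|(\sum_(k < (size p).+1) (p.[tnth x ord0 - k%:R])%:E)| = 0)%E.
    under eq_integral do rewrite gee0_abs ?sume_ge0 //.
    rewrite ge0_integral_sum //.
    by rewrite big1 // => k _; exact: Hz.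
  move/ae_eq_integral_abs => /(_ measurableT).
  have ms : measurable_fun setT (fun x : d.+1.-tuple R =>
      \sum_(k < (size p).+1) (p.[tnth x ord0 - k%:R])%:E)%E.
    by apply: emeasurable_sum => k; exact: mf.
  move=> /(_ ms) [N [mN N0 HN]].
  move/eqP: mu0; apply; apply/eqP; rewrite -measure_le0 -N0 le_measure ?inE //.
  move=> x _; apply: HN => /= /(_ I) /eqP; rewrite sumEFin eqe.
  by rewrite gt_eqF // (@pp_sum_gt0 R h h_ge1 h_ge0).
have [gamma [g0 gJ]] := @ex_gamma R _ Hk.
exists [tuple (nat_of_ord k)%:R | j < d.+1], gamma; split => //.
apply: (le_trans (leeD2l _ gJ)).
have mHI : forall I : {set 'I_d.+1}, measurable_fun setT (fun x : d.+1.-tuple R =>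
    (HI h I (fun j => tnth x j - tnth [tuple (nat_of_ord k)%:R | j < d.+1] j))%:E).
  move=> I; apply/measurable_EFinP; rewrite /HI.
  apply: measurable_prod => j _.
  apply: (measurableT_comp (f := horner h)); first exact: measurable_poly.
  apply: measurable_funM; first exact: measurable_cst.
  apply: measurable_funB; last exact: measurable_cst.
  exact: measurable_tnth.
rewrite -ge0_integral_sum //; last first.
  move=> I x _; rewrite lee_fin /HI; apply: prodr_ge0 => j _; exact: h_ge0.
rewrite -[mu setT]mul1e -integral_cst // -ge0_integralD //.
apply: ge0_le_integral => //.
- by move=> x _; rewrite adde_ge0 // ?lee_fin ?ler01 // f0.
- by apply: emeasurable_funD => //; exact: measurable_cst.
- by apply: emeasurable_sum => I.
move=> x _; rewrite sumEFin HI_sum /= -EFinD lee_fin.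
rewrite big_ord_recl tnth_mktuple ppE addrC subrK.
apply: ler_peMr; first by apply: (le_trans ler01); exact: G_ge1.
apply: (big_ind (fun y : R => 1 <= y)) => //; first exact: mulr_ege1.
by move=> j _; exact: G_ge1.
Qed.
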